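(* Consider the algorithm AILFEM described in the context, with arbitrary parameters $0<\theta\le 1$, $C_{\mathrm{mark}}\ge 1$, $\lambda_{\mathrm{lin}},\lambda_{\mathrm{alg}}>0$, $i_{\min}\in\mathbb{N}$, $\delta>0$ and an initial guess $u_0^{0,0}\in\mathcal{X}_0$ with $|||u_0^{0,0}|||\le 2M$. Then, independently of the adaptivity parameters $\theta$, $\lambda_{\mathrm{lin}}$ and $\lambda_{\mathrm{alg}}$, the $i$-loop of the algorithm always terminates, i.e., $\underline{i}[\ell,k]<\infty$ for all $(\ell,k,0)\in\mathcal{Q}$.
   Context: Abstract setting. Let $\mathcal{X}$ be a real Hilbert space with scalar product $\langle\!\langle\cdot,\cdot\rangle\!\rangle$ and norm $|||\cdot|||$, with dual space $\mathcal{X}'$ (norm $\|\cdot\|_{\mathcal{X}'}$, duality bracket $\langle\cdot,\cdot\rangle$). Let $\mathcal{A}:\mathcal{X}\to\mathcal{X}'$ be a nonlinear operator and $F\in\mathcal{X}'$ with $\mathcal{A}0\neq F$. Assume: (SM) there is $\alpha>0$ with $\alpha|||v-w|||^2\le\langle\mathcal{A}v-\mathcal{A}w,v-w\rangle$ for all $v,w\in\mathcal{X}$; (LIP) for every $\vartheta>0$ there is $L[\vartheta]>0$ with $\langle\mathcal{A}v-\mathcal{A}w,\varphi\rangle\le L[\vartheta]\,|||v-w|||\,|||\varphi|||$ for all $v,w,\varphi\in\mathcal{X}$ with $\max\{|||v|||,|||v-w|||\}\le\vartheta$; (POT) there is a Gâteaux differentiable $\mathcal{P}:\mathcal{X}\to\mathbb{R}$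 with $\langle\mathcal{A}w,v\rangle=\lim_{t\to0}(\mathcal{P}(w+tv)-\mathcal{P}(w))/t$ for all $v,w$. The energy is $\mathcal{E}(v):=\mathcal{P}(v)-F(v)$. For every closed subspace $\mathcal{Y}\subseteq\mathcal{X}$ there is a unique $u^\star_{\mathcal{Y}}\in\mathcal{Y}$ with $\langle\mathcal{A}u^\star_{\mathcal{Y}},v\rangle=F(v)$ for all $v\in\mathcal{Y}$; $u^\star:=u^\star_{\mathcal{X}}$. Put $M:=\|F-\mathcal{A}0\|_{\mathcal{X}'}/\alpha$. Meshes. $\mathcal{T}_0$ is an initial conforming simplicial triangulation; $\mathtt{refine}(\mathcal{T}_H,\mathcal{M}_H)$ is the coarsest newest-vertex-bisection (NVB) refinement of $\mathcal{T}_H$ in which all elements of $\mathcal{M}_H\subseteq\mathcal{T}_H$ are refined; $\mathbb{T}(\mathcal{T}_H)$ is the set of meshes obtained from $\mathcal{T}_H$ by finitely many NVB steps, $\mathbb{T}:=\mathbb{T}(\mathcal{T}_0)$. Each $\mathcal{T}_H\in\mathbb{T}$ is associated with a finite-dimensional subspace $\mathcal{X}_H\subset\mathcal{X}$, nested: $\mathcal{X}_H\subseteq\mathcal{X}_h$ if $\mathcal{T}_h\in\mathbb{T}(\mathcal{T}_H)$. Write $u_H^\star:=u^\star_{\mathcal{X}_H}$. Zarantonello map: for $\delta>0$, $w_H\in\mathcal{X}_H$, $\Phi_H(\delta;w_H)\in\mathcal{X}_H$ is the unique solution of $\langle\!\langle\Phi_H(\delta;w_H),v_H\rangle\!\rangle=\langle\!\langle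 w_H,v_H\rangle\!\rangle+\delta[F(v_H)-\langle\mathcal{A}w_H,v_H\rangle]$ for all $v_H\in\mathcal{X}_H$. Algebraic solver: there is $0<q_{\mathrm{alg}}<1$ and for each $\mathcal{T}_H$ a map $\Psi_H:\mathcal{X}'\times\mathcal{X}_H\to\mathcal{X}_H$ such that for every $\varphi\in\mathcal{X}'$, with $w_H^\star\in\mathcal{X}_H$ solving $\langle\!\langle w_H^\star,v_H\rangle\!\rangle=\varphi(v_H)$ for all $v_H\in\mathcal{X}_H$, one has $|||w_H^\star-\Psi_H(\varphi;w_H)|||\le q_{\mathrm{alg}}|||w_H^\star-w_H|||$ for all $w_H\in\mathcal{X}_H$. One writes $\Psi_H(w_H^\star;\cdot)$ for $\Psi_H(\varphi;\cdot)$. Estimator: for $\mathcal{T}_H\in\mathbb{T}$, $T\in\mathcal{T}_H$, $v_H\in\mathcal{X}_H$ a number $\eta_H(T,v_H)\ge0$ is given; $\eta_H(\mathcal{U},v_H):=(\sum_{T\in\mathcal{U}}\eta_H(T,v_H)^2)^{1/2}$ for $\mathcal{U}\subseteq\mathcal{T}_H$ and $\eta_H(v_H):=\eta_H(\mathcal{T}_H,v_H)$. Index $\ell$ refers to $\mathcal{T}_\ell$, $\mathcal{X}_\ell$, $\Phi_\ell$, $\Psi_\ell$, $\eta_\ell$, $u_\ell^\star$. Algorithm AILFEM. Input: $\mathcal{T}_0$, $0<\theta\le1$, $C_{\mathrm{mark}}\ge1$, $\lambda_{\mathrm{lin}},\lambda_{\mathrm{alg}}>0$, $i_{\min}\in\mathbb{N}$,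 $\delta>0$, $u_0^{0,0}\in\mathcal{X}_0$ with $|||u_0^{0,0}|||\le2M$; set $u_0^{0,\star}:=u_0^{0,\underline{i}}:=u_0^{0,0}$. For $\ell=0,1,2,\dots$: (I) For $k=1,2,\dots$: set $u_\ell^{k,0}:=u_\ell^{k-1,\underline{i}}$ and $u_\ell^{k,\star}:=\Phi_\ell(\delta;u_\ell^{k-1,\underline{i}})$ (not computed). For $i=1,2,\dots$: compute $u_\ell^{k,i}:=\Psi_\ell(u_\ell^{k,\star};u_\ell^{k,i-1})$ and $\eta_\ell(u_\ell^{k,i})$; terminate the $i$-loop with $\underline{i}[\ell,k]:=i$ if $|||u_\ell^{k,i-1}-u_\ell^{k,i}|||\le\lambda_{\mathrm{alg}}[\lambda_{\mathrm{lin}}\eta_\ell(u_\ell^{k,i})+|||u_\ell^{k,i}-u_\ell^{k,0}|||]$ and $i_{\min}\le i$. Write $u_\ell^{k,\underline{i}}:=u_\ell^{k,\underline{i}[\ell,k]}$. Terminate the $k$-loop with $\underline{k}[\ell]:=k$ if $\mathcal{E}(u_\ell^{k,0})-\mathcal{E}(u_\ell^{k,\underline{i}})\le\lambda_{\mathrm{lin}}^2\eta_\ell(u_\ell^{k,\underline{i}})^2$ and $|||u_\ell^{k,\underline{i}}|||\le2M$. (II) Choose $\mathcal{M}_\ell\subseteq\mathcal{T}_\ell$ with $\theta\,\eta_\ell(u_\ell^{\underline{k},\underline{i}})^2\le\eta_\ell(\mathcal{M}_\ell,u_\ell^{\underline{k},\underline{i}})^2$ and $\#\mathcal{M}_\ell\le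 C_{\mathrm{mark}}\min\{\#\mathcal{U}:\mathcal{U}\subseteq\mathcal{T}_\ell,\ \theta\eta_\ell(u_\ell^{\underline{k},\underline{i}})^2\le\eta_\ell(\mathcal{U},u_\ell^{\underline{k},\underline{i}})^2\}$. (III) $\mathcal{T}_{\ell+1}:=\mathtt{refine}(\mathcal{T}_\ell,\mathcal{M}_\ell)$ and $u_{\ell+1}^{0,0}:=u_{\ell+1}^{0,\underline{i}}:=u_{\ell+1}^{0,\star}:=u_\ell^{\underline{k},\underline{i}}$. Index set: $\mathcal{Q}:=\{(\ell,k,i)\in\mathbb{N}_0^3: u_\ell^{k,i}\text{ is used in the algorithm}\}$, and $\underline{i}[\ell,k]:=\sup\{i\in\mathbb{N}:(\ell,k,i)\in\mathcal{Q}\}\in\mathbb{N}\cup\{\infty\}$. *)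

(* Defs.v *)
From HB Require Import structures.
From mathcomp Require Import all_boot all_order all_algebra.
From mathcomp Require Import all_classical all_reals all_analysis.
Set Implicit Arguments. Unset Strict Implicit. Unset Printing Implicit Defensive.
Import Order.TTheory GRing.Theory Num.Theory.
Local Open Scope classical_set_scope.
Local Open Scope ring_scope.

Section AILFEM.
Variables (R : realType) (V : lmodType R).

Variable ip : V -> V -> R.

Definition hnorm (v : V) : R := Num.sqrt (ip v v).

Definition is_real_hilbert : Prop :=
  [/\ (forall u v, ip u v = ip v u),
      (forall a u v w, ip (a *: u + v) w = a * ip u w + ip v w),
      (forall v, v != 0 -> 0 < ip v v),
      (forall v, 0 <= ip v v) &
      (forall u : nat -> V,
         (forall e : R, 0 < e -> exists N, forall m n, (N <= m)%N -> (N <= n)%N ->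
            hnorm (u m - u n) < e) ->
         exists x, forall e : R, 0 < e -> exists N, forall n, (N <= n)%N ->
            hnorm (u n - x) < e)].

Definition in_dual (f : V -> R) : Prop :=
  (forall a u v, f (a *: u + v) = a * f u + f v) /\
  exists C : R, forall v, `|f v| <= C * hnorm v.

Definition dual_norm (f : V -> R) : R :=
  sup [set `|f v| | v in [set v | hnorm v <= 1]].

Definition fin_dim_subspace (S : set V) : Prop :=
  exists (n : nat) (b : 'I_n -> V),
    S = [set v | exists c : 'I_n -> R, v = \sum_(j < n) c j *: b j].

Variables (Tm : Type) (Elt : Tm -> finType)
  (refine : forall T : Tm, {set Elt T} -> Tm).

Inductive refines : Tm -> Tm -> Prop :=
| refines_refl T : refines T T
| refines_step T (Mk : {set Elt T}) T' : refines (@refine T Mk) T' -> refines T T'.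

Variable eta : forall T : Tm, Elt T -> V -> R.

Definition eta_on (T : Tm) (U : {set Elt T}) (v : V) : R :=
  Num.sqrt (\sum_(t in U) eta t v ^+ 2).
Definition eta_all (T : Tm) (v : V) : R := eta_on [set: Elt T] v.

Variables (A : V -> V -> R) (F : V -> R) (P : V -> R)
  (Psi : Tm -> (V -> R) -> V -> V)
  (T0 : Tm) (u0 : V)
  (theta Cmark lam_lin lam_alg delta M : R) (imin : nat).

Definition energy (v : V) : R := P v - F v.

(* functional v |-> <<w,v>> + delta [F(v) - <A w, v>] defining Phi(delta; w) *)
Definition zar_rhs (w : V) : V -> R := fun v => ip w v + delta * (F v - A w v).

(* u^{k,i}, i = 0,1,2,..., of the i-loop started from u^{k,0} = w *)
Fixpoint alg_iter (T : Tm) (w : V) (i : nat) : V :=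
  match i with
  | 0 => w
  | i'.+1 => Psi T (zar_rhs w) (alg_iter T w i')
  end.

Definition i_stop (T : Tm) (w : V) (i : nat) : Prop :=
  [/\ (1 <= i)%N, (imin <= i)%N &
      hnorm (alg_iter T w i.-1 - alg_iter T w i)
        <= lam_alg * (lam_lin * eta_all T (alg_iter T w i) + hnorm (alg_iter T w i - w))].

Definition i_stops_at (T : Tm) (w : V) (i : nat) : Prop :=
  i_stop T w i /\ forall j, (j < i)%N -> ~ i_stop T w j.

(* stopping criterion of the k-loop, with u^{k,0} = w, u^{k,i_} = u *)
Definition k_stop (w u : V) (T : Tm) : Prop :=
  energy w - energy u <= lam_lin ^+ 2 * eta_all T u ^+ 2 /\ hnorm u <= 2 * M.

Definition dorfler (T : Tm) (u : V) (U : {set Elt T}) : Prop :=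
  theta * eta_all T u ^+ 2 <= eta_on U u ^+ 2.
Definition admissible_marking (T : Tm) (u : V) (Mk : {set Elt T}) : Prop :=
  dorfler u Mk /\
  forall U : {set Elt T}, dorfler u U -> (#|Mk|%:R : R) <= Cmark * (#|U|%:R).

(* reached l k T w : the algorithm (for some admissible choice of the marked
   sets) enters the i-loop at level l, step k >= 1, on mesh T_l = T, with
   u_l^{k,0} = w; i.e. (l,k,0) \in Q with k >= 1. *)
Inductive reached : nat -> nat -> Tm -> V -> Prop :=
| reached_start : reached 0 1 T0 u0
| reached_next_k l k T w i :
    reached l k T w -> i_stops_at T w i ->
    ~ k_stop w (alg_iter T w i) T ->
    reached l k.+1 T (alg_iter T w i)
| reached_next_l l k T w i (Mk : {set Elt T}) :
    reached l k T w -> i_stops_at T w i ->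
    k_stop w (alg_iter T w i) T ->
    admissible_marking (alg_iter T w i) Mk ->
    reached l.+1 1 (@refine T Mk) (alg_iter T w i).

End AILFEM.

(* Main.v *)
From HB Require Import structures.
From mathcomp Require Import all_boot all_order all_algebra.
From mathcomp Require Import all_classical all_reals all_analysis.
From mathcomp Require Import lra ring.
Require Import Defs.
Import Order.TTheory GRing.Theory Num.Theory numFieldNormedType.Exports.
Local Open Scope classical_set_scope.
Local Open Scope ring_scope.
Set Implicit Arguments. Unset Strict Implicit. Unset Printing Implicit Defensive.

Definition bil (R : realType) (V : lmodType R) (ip : V -> V -> R) :=
  (forall u v, ip u v = ip v u) /\
  (forall a u v w, ip (a *: u + v) w = a * ip u w + ip v w).

Lemma ip0l (R : realType) (V : lmodType R) (ip : V -> V -> R) : bil ip -> forall w, ip 0 w = 0.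
Proof. move=> [_ L] w; have := L 1 0 0 w; rewrite scale1r addr0 mul1r; lra. Qed.
Lemma ipDl (R : realType) (V : lmodType R) (ip : V -> V -> R) : bil ip -> forall u v w, ip (u + v) w = ip u w + ip v w.
Proof. move=> [_ L] u v w; by rewrite -{1}[u]scale1r L mul1r. Qed.
Lemma ipZl (R : realType) (V : lmodType R) (ip : V -> V -> R) : bil ip -> forall a u w, ip (a *: u) w = a * ip u w.
Proof. move=> B a u w; have [_ L] := B; by rewrite -[a *: u]addr0 L ip0l // addr0. Qed.
Lemma ipNl (R : realType) (V : lmodType R) (ip : V -> V -> R) : bil ip -> forall u w, ip (- u) w = - ip u w.
Proof. move=> B u w; by rewrite -scaleN1r ipZl // mulN1r. Qed.
Lemma ipBl (R : realType) (V : lmodType R) (ip : V -> V -> R) : bil ip -> forall u v w, ip (u - v) w = ip u w - ip v w.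
Proof. move=> B u v w; by rewrite ipDl // ipNl. Qed.
Lemma ip0r (R : realType) (V : lmodType R) (ip : V -> V -> R) : bil ip -> forall w, ip w 0 = 0.
Proof. move=> B w; case: (B) => C _; by rewrite C ip0l. Qed.
Lemma ipDr (R : realType) (V : lmodType R) (ip : V -> V -> R) : bil ip -> forall u v w, ip w (u + v) = ip w u + ip w v.
Proof. move=> B u v w; case: (B) => C _; by rewrite !(C w) ipDl. Qed.
Lemma ipZr (R : realType) (V : lmodType R) (ip : V -> V -> R) : bil ip -> forall a u w, ip w (a *: u) = a * ip w u.
Proof. move=> B a u w; case: (B) => C _; by rewrite !(C w) ipZl. Qed.
Lemma ipNr (R : realType) (V : lmodType R) (ip : V -> V -> R) : bil ip -> forall u w, ip w (- u) = - ip w u.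
Proof. move=> B u w; case: (B) => C _; by rewrite !(C w) ipNl. Qed.
Lemma ipBr (R : realType) (V : lmodType R) (ip : V -> V -> R) : bil ip -> forall u v w, ip w (u - v) = ip w u - ip w v.
Proof. move=> B u v w; by rewrite ipDr // ipNr. Qed.

Lemma CS (R : realType) (V : lmodType R) (ip : V -> V -> R) : bil ip -> (forall v, v != 0 -> 0 < ip v v) ->
  (forall v, 0 <= ip v v) ->
  forall u v, ip u v ^+ 2 <= ip u u * ip v v.
Proof.
move=> B pos nn u v.
have [->|nz] := eqVneq v 0; first by rewrite ip0r // ip0l // mulr0 expr0n.
have vv := pos v nz.
set t := ip u v / ip v v.
have := nn (u - t *: v).
rewrite (ipBl B u (t *: v)) (ipBr B u (t *: v) u) (ipBr B u (t *: v) (t *: v)).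
rewrite (ipZr B t v u) (ipZl B t v u) (ipZl B t v (t *: v)) (ipZr B t v v).
case: (B) => C _; rewrite (C v u).
have e : t * ip v v = ip u v by rewrite /t divfK // gt_eqF.
move=> h.
have h2 : 0 <= ip u u - t * ip u v.
  move: h; rewrite e; set a := ip u u; set b := t * ip u v; set c := ip u v. lra.
have : 0 <= ip u u * ip v v - ip u v ^+ 2.
  have -> : ip u u * ip v v - ip u v ^+ 2 = ip v v * (ip u u - t * ip u v).
    by rewrite -e; ring.
  by apply: mulr_ge0 => //; apply: ltW.
by rewrite subr_ge0.
Qed.


Lemma hnorm_ge0 (R : realType) (V : lmodType R) (ip : V -> V -> R) v : 0 <= hnorm ip v.
Proof. exact: sqrtr_ge0. Qed.

Lemma hnorm_sq (R : realType) (V : lmodType R) (ip : V -> V -> R) : (forall v, 0 <= ip v v) -> forall v, hnorm ip v ^+ 2 = ip v v.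
Proof. move=> nn v; exact: sqr_sqrtr. Qed.

Lemma hnormD (R : realType) (V : lmodType R) (ip : V -> V -> R) : bil ip -> (forall v, v != 0 -> 0 < ip v v) ->
  (forall v, 0 <= ip v v) ->
  forall x y, hnorm ip (x + y) <= hnorm ip x + hnorm ip y.
Proof.
move=> B pos nn x y.
have hx := hnorm_ge0 ip x; have hy := hnorm_ge0 ip y.
have cs := CS B pos nn x y.
have ex := hnorm_sq nn x; have ey := hnorm_sq nn y.
have hxy : ip x y <= hnorm ip x * hnorm ip y.
  rewrite -[_ * _]ger0_norm ?mulr_ge0 // -sqrtr_sqr exprMn ex ey.
  apply: (le_trans (ler_norm _)).
  by rewrite -sqrtr_sqr ler_sqrt // mulr_ge0.
have e2 : ip (x + y) (x + y) = ip x x + 2 * ip x y + ip y y.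
  rewrite (ipDl B x y) (ipDr B x y x) (ipDr B x y y).
  case: (B) => C _; rewrite (C y x); ring.
rewrite -(ger0_norm (addr_ge0 hx hy)) -sqrtr_sqr /hnorm ler_sqrt ?sqr_ge0 // e2.
rewrite -ex -ey.
set a := hnorm ip x in hx hxy *; set b := hnorm ip y in hy hxy *.
set c := ip x y in hxy *.
rewrite !sqrtr_sqr !ger0_norm //.
have -> : (a + b) ^+ 2 = a ^+ 2 + 2 * (a * b) + b ^+ 2 by ring.
lra.
Qed.

Lemma hnormN (R : realType) (V : lmodType R) (ip : V -> V -> R) : bil ip -> forall x, hnorm ip (- x) = hnorm ip x.
Proof. move=> B x; by rewrite /hnorm (ipNl B x (- x)) (ipNr B x x) opprK. Qed.

Definition lin (R : realType) (V : lmodType R) (f : V -> R) :=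
  forall a u v, f (a *: u + v) = a * f u + f v.
Definition riesz (R : realType) (V : lmodType R) (ip : V -> V -> R) (S : set V) :=
  forall phi, lin phi -> exists ws, S ws /\ forall v, S v -> ip ws v = phi v.
Definition subsp (R : realType) (V : lmodType R) (S : set V) :=
  S 0 /\ forall a u v, S u -> S v -> S (a *: u + v).
Definition ext1 (R : realType) (V : lmodType R) (S : set V) (b : V) : set V :=
  [set v | exists a s, S s /\ v = a *: b + s].

Lemma lin_ip (R : realType) (V : lmodType R) (ip : V -> V -> R) : bil ip -> forall b, lin (ip b).
Proof. move=> B b a u v; by rewrite (ipDr B (a *: u) v b) (ipZr B a u b). Qed.

Lemma subsp_ext (R : realType) (V : lmodType R) (S : set V) b : subsp S -> subsp (ext1 S b).
Proof.
move=> [S0 SL]; split.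
  by exists 0, 0; split => //; rewrite scale0r addr0.
move=> a u v [a1 [s1 [S1 ->]]] [a2 [s2 [S2 ->]]].
exists (a * a1 + a2), (a *: s1 + s2); split; first exact: SL.
rewrite scalerDr scalerDl scalerA.
rewrite -!addrA; congr (_ + _); rewrite addrCA; congr (_ + _); by rewrite addrC.
Qed.

Lemma riesz_ext (R : realType) (V : lmodType R) (ip : V -> V -> R) (S : set V) b :
  bil ip -> (forall v, v != 0 -> 0 < ip v v) ->
  subsp S -> riesz ip S -> riesz ip (ext1 S b).
Proof.
move=> B pos [S0 SL] RS phi lphi.
have [p [Sp Hp]] := RS (ip b) (lin_ip B b).
have [w' [Sw Hw]] := RS phi lphi.
have rorth : forall s, S s -> ip (b - p) s = 0.
  by move=> s Ss; rewrite (ipBl B b p s) (Hp s Ss) subrr.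
have phi0 : phi 0 = 0.
  have := lphi 1 0 0; rewrite scale1r addr0 mul1r; lra.
have philin2 : forall a u, phi (a *: u) = a * phi u.
  by move=> a u; rewrite -[a *: u]addr0 lphi phi0 addr0.
have [r0|rnz] := eqVneq (b - p) 0.
  have bp : b = p by apply/eqP; rewrite -subr_eq0 r0.
  exists w'; split.
    by exists 0, w'; split => //; rewrite scale0r add0r.
  move=> v [a [s [Ss ->]]]; apply: Hw; rewrite bp; exact: SL.
have rr := pos _ rnz.
set r := b - p in rorth rnz rr *.
set t := (phi b - ip w' b) / ip r r.
have et : t * ip r r = phi b - ip w' b by rewrite /t divfK // gt_eqF.
exists (w' + t *: r); split.
  exists t, ((- t) *: p + w'); split; first exact: SL.
  by rewrite /r scalerBr scaleNr addrC -addrA.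
move=> v [a [s [Ss ->]]].
rewrite (ipDr B (a *: b) s) (ipZr B a b) (ipDl B w' (t *: r)) (ipZl B t r b).
rewrite (ipDl B w' (t *: r)) (ipZl B t r s) (rorth s Ss) (Hw s Ss).
have -> : ip r b = ip r r.
  have -> : b = r + p by rewrite /r subrK.
  by rewrite (ipDr B r p r) (rorth p Sp) addr0.
rewrite lphi et; ring.
Qed.

Definition spanI (R : realType) (V : lmodType R) (n : nat) (b : 'I_n -> V) : set V :=
  [set v | exists c : 'I_n -> R, v = \sum_(j < n) c j *: b j].

Lemma subsp_spanI (R : realType) (V : lmodType R) n (b : 'I_n -> V) : subsp (spanI b).
Proof.
split.
  exists (fun _ => 0); rewrite big1 // => j _; exact: scale0r.
move=> a u v [c ->] [d ->].
exists (fun j => a * c j + d j).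
rewrite scaler_sumr -big_split /=; apply: eq_bigr => j _.
by rewrite scalerDl scalerA.
Qed.

Lemma riesz_eq (R : realType) (V : lmodType R) (ip : V -> V -> R) (S S' : set V) :
  (forall v, S v <-> S' v) -> riesz ip S -> riesz ip S'.
Proof.
move=> E RS phi lphi; have [ws [Sws H]] := RS phi lphi.
exists ws; split; first by apply/E.
by move=> v /E; apply: H.
Qed.

Lemma riesz_spanI (R : realType) (V : lmodType R) (ip : V -> V -> R) :
  bil ip -> (forall v, v != 0 -> 0 < ip v v) ->
  forall n (b : 'I_n -> V), riesz ip (spanI b).
Proof.
move=> B pos; elim=> [|n IH] b.
  move=> phi lphi; exists 0; split.
    by exists (fun _ => 0); rewrite big_ord0.
  move=> v [c ->]; rewrite big_ord0 (ip0l B).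
  have := lphi 1 0 0; rewrite scale1r addr0 mul1r; lra.
apply: (@riesz_eq _ _ _ (ext1 (spanI (fun j => b (lift ord0 j))) (b ord0))).
  move=> v; split.
    move=> [a [s [[c ->] ->]]].
    exists (fun j => if unlift ord0 j is Some j' then c j' else a).
    rewrite big_ord_recl unlift_none; congr (_ + _).
    by apply: eq_bigr => j _; rewrite liftK.
  move=> [c ->]; exists (c ord0), (\sum_(j < n) c (lift ord0 j) *: b (lift ord0 j)).
  split; first by exists (fun j => c (lift ord0 j)).
  by rewrite big_ord_recl.
apply: riesz_ext => //; first exact: subsp_spanI.
Qed.

Lemma small_pow (R : realType) (q e : R) : 0 <= q -> q < 1 -> 0 < e -> exists N : nat, q ^+ N <= e.
Proof.
move=> q0 q1 e0.
have : `|q| < 1 by rewrite ger0_norm.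
move/cvg_expr/cvgr0_norm_lt => /(_ e e0) [N _ HN].
exists N; have := HN N (leqnn N) => /=.
rewrite ger0_norm ?exprn_ge0 // => /ltW //.
Qed.

Lemma ip_bound (R : realType) (V : lmodType R) (ip : V -> V -> R) :
  bil ip -> (forall v, v != 0 -> 0 < ip v v) -> (forall v, 0 <= ip v v) ->
  forall u v, `|ip u v| <= hnorm ip u * hnorm ip v.
Proof.
move=> B pos nn u v.
rewrite -sqrtr_sqr /hnorm -sqrtrM //.
by rewrite ler_sqrt ?mulr_ge0 // CS.
Qed.

Lemma zar_dual (R : realType) (V : lmodType R) (ip : V -> V -> R) (A : V -> V -> R) (F : V -> R) (delta : R) w :
  bil ip -> (forall v, v != 0 -> 0 < ip v v) -> (forall v, 0 <= ip v v) ->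
  in_dual ip (A w) -> in_dual ip F -> in_dual ip (zar_rhs ip A F delta w).
Proof.
move=> B pos nn [LA [CA HA]] [LF [CF HF]]; split.
  move=> a u v; rewrite /zar_rhs (lin_ip B w a u v) LA LF; ring.
exists (hnorm ip w + `|delta| * (`|CA| + `|CF|)) => v.
rewrite /zar_rhs.
have h1 := ip_bound B pos nn w v.
have hv := hnorm_ge0 ip v.
have h2 : `|F v| <= `|CF| * hnorm ip v.
  apply: (le_trans (HF v)); apply: ler_wpM2r => //; exact: ler_norm.
have h3 : `|A w v| <= `|CA| * hnorm ip v.
  apply: (le_trans (HA v)); apply: ler_wpM2r => //; exact: ler_norm.
apply: (le_trans (ler_normD _ _)).
rewrite normrM.
have h4 : `|F v - A w v| <= (`|CA| + `|CF|) * hnorm ip v.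
  apply: (le_trans (ler_normB _ _)); rewrite mulrDl; lra.
have h5 : `|delta| * `|F v - A w v| <= `|delta| * ((`|CA| + `|CF|) * hnorm ip v).
  by apply: ler_wpM2l.
rewrite mulrDl -mulrA; lra.
Qed.

Unset Implicit Arguments.
Theorem lemma5
  (R : realType) (V : lmodType R) (ip : V -> V -> R)
  (Tm : Type) (Elt : Tm -> finType) (refine : forall T : Tm, {set Elt T} -> Tm)
  (eta : forall T : Tm, Elt T -> V -> R)
  (A : V -> V -> R) (F : V -> R) (P : V -> R) (alpha : R)
  (XS : Tm -> set V) (Psi : Tm -> (V -> R) -> V -> V) (q_alg : R)
  (T0 : Tm) (u0 : V)
  (theta Cmark lam_lin lam_alg delta : R) (imin : nat) :
  is_real_hilbert ip ->
  (* A : X -> X', F \in X', A 0 <> F *)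
  (forall v, in_dual ip (A v)) ->
  in_dual ip F ->
  A 0 <> F ->
  (* (SM) *)
  0 < alpha ->
  (forall v w, alpha * hnorm ip (v - w) ^+ 2 <= A v (v - w) - A w (v - w)) ->
  (* (LIP) *)
  (forall vt : R, 0 < vt -> exists L : R, 0 < L /\
     forall v w phi, Num.max (hnorm ip v) (hnorm ip (v - w)) <= vt ->
       A v phi - A w phi <= L * hnorm ip (v - w) * hnorm ip phi) ->
  (* (POT) *)
  (forall w v, (fun t : R => (P (w + t *: v) - P w) / t) @ (0 : R)^' --> (A w v : R)) ->
  (* discrete spaces: finite-dimensional, nested along refinement *)
  (forall T, fin_dim_subspace (XS T)) ->
  (forall T T', refines refine T T' -> XS T `<=` XS T') ->
  (* estimator *)
  (forall T (t : Elt T) v, XS T v -> 0 <= eta T t v) ->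
  (* contractive algebraic solver *)
  0 < q_alg -> q_alg < 1 ->
  (forall T (phi : V -> R), in_dual ip phi -> forall w, XS T w ->
     XS T (Psi T phi w) /\
     forall ws, XS T ws -> (forall v, XS T v -> ip ws v = phi v) ->
       hnorm ip (ws - Psi T phi w) <= q_alg * hnorm ip (ws - w)) ->
  (* parameters and initial guess *)
  0 < theta -> theta <= 1 -> 1 <= Cmark -> 0 < lam_lin -> 0 < lam_alg ->
  0 < delta ->
  XS T0 u0 ->
  hnorm ip u0 <= 2 * (dual_norm ip (fun v => F v - A 0 v) / alpha) ->
  (* conclusion: every i-loop that is entered terminates *)
  forall l k T w,
    reached ip refine eta A F P Psi T0 u0 theta Cmark lam_lin lam_alg delta
      (dual_norm ip (fun v => F v - A 0 v) / alpha) imin l k T w ->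
    exists i, i_stop ip eta A F Psi lam_lin lam_alg delta imin T w i.
Proof.
move=> HH Adual Fdual _ _ _ _ _ fin nest _ q0 q1 HPsi _ _ _ lam0 alg0 _ XS0 _ l k T w Hr.
have [ipC ipL pos nn _] := HH.
have B : bil ip by split.
have zdual : forall w, in_dual ip (zar_rhs ip A F delta w).
  by move=> w'; apply: zar_dual.
have iterXS : forall T w i, XS T w -> XS T (alg_iter ip A F Psi delta T w i).
  move=> T' w' i Hw; elim: i => [|i IH] //=.
  by have [] := HPsi T' _ (zdual w') _ IH.
have inv : XS T w.
  elim: Hr => //.
  - by move=> l' k' T' w' i _ IH _ _; apply: iterXS.
  - move=> l' k' T' w' i Mk _ IH _ _ _; apply: (nest T').
      by apply: refines_step; apply: refines_refl.
    exact: iterXS.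
have [n [b Eb]] := fin T.
have [ws [Sws Hws]] : exists ws, XS T ws /\ forall v, XS T v -> ip ws v = zar_rhs ip A F delta w v.
  have := riesz_spanI B pos b (zdual w).1.
  move=> [ws [Sws H]]; exists ws; rewrite Eb; split => //.
set u := alg_iter ip A F Psi delta T w.
set e0 := hnorm ip (ws - w).
have e0ge : 0 <= e0 by apply: hnorm_ge0.
have econv : forall i, hnorm ip (ws - u i) <= q_alg ^+ i * e0.
  elim=> [|i IH]; first by rewrite /u /= expr0 mul1r.
  have [_ H] := HPsi T _ (zdual w) _ (iterXS T w i inv).
  apply: (le_trans (H ws Sws Hws)); rewrite exprS -mulrA.
  by apply: ler_wpM2l => //; apply: ltW.
pose eps := lam_alg / (2 + lam_alg).
have eps0 : 0 < eps by apply: divr_gt0 => //; lra.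
have [j Hj] := small_pow (ltW q0) q1 eps0.
exists (j + imin).+1; split => //; first exact: leq_trans (leq_addl j imin) (leqnSn _).
rewrite /=.
set x := q_alg ^+ (j + imin).
have x0 : 0 <= x by apply: exprn_ge0; apply: ltW.
have xe : x <= eps.
  apply: le_trans Hj; rewrite /x exprD -[X in _ <= X]mulr1.
  apply: ler_wpM2l; first by apply: exprn_ge0; apply: ltW.
  by apply: exprn_ile1 => //; apply: ltW.
have e1 := econv (j + imin)%N.
have e2 := econv (j + imin).+1.
rewrite exprS -/x in e2.
have qx : q_alg * x <= x.
  by rewrite -[X in _ <= X]mul1r; apply: ler_wpM2r => //; apply: ltW.
have e2' : hnorm ip (ws - u (j + imin).+1) <= x * e0.
  apply: (le_trans e2); by apply: ler_wpM2r.
have lhs : hnorm ip (u (j + imin)%N - u (j + imin).+1) <= 2 * x * e0.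
  have -> : u (j + imin)%N - u (j + imin).+1 = - (ws - u (j + imin)%N) + (ws - u (j + imin).+1).
    by rewrite opprB addrA subrK.
  apply: (le_trans (hnormD B pos nn _ _)); rewrite (hnormN B); rewrite -/x in e1; lra.
have tri : e0 <= hnorm ip (u (j + imin).+1 - w) + hnorm ip (ws - u (j + imin).+1).
  rewrite /e0; have -> : ws - w = (u (j + imin).+1 - w) + (ws - u (j + imin).+1).
    by rewrite [RHS]addrC [RHS]addrA subrK.
  exact: hnormD.
have etage : 0 <= eta_all eta T (u (j + imin).+1) by apply: sqrtr_ge0.
have key : 2 * x <= lam_alg * (1 - x).
  have : x * (2 + lam_alg) <= lam_alg.
    by move: xe; rewrite /eps ler_pdivlMr //; lra.
  lra.
have k1 : 2 * x * e0 <= lam_alg * (1 - x) * e0 by apply: ler_wpM2r.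
have k2 : lam_alg * ((1 - x) * e0) <= lam_alg * (lam_lin * eta_all eta T (u (j + imin).+1) + hnorm ip (u (j + imin).+1 - w)).
  apply: ler_wpM2l; first by apply: ltW.
  have : 0 <= lam_lin * eta_all eta T (u (j + imin).+1) by apply: mulr_ge0 => //; apply: ltW.
  rewrite mulrBl mul1r; lra.
rewrite mulrA in k2.
apply: (le_trans lhs); lra.
Qed.
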